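(* For every integer $n\ge 3$, if $T$ is a standard Young tableau of shape $(n,n)$ chosen uniformly at random, then $$SP\big((n,n),[1,3],[2,1]\big)=\Pr(T_{1,3}>T_{2,1})-\Pr(T_{2,1}>T_{1,3})=\frac{3}{2n-1}=\frac{3}{2}\cdot\frac1n+\frac34\cdot\frac1{n^2}+\frac38\cdot\frac1{n^3}+O\!\left(\frac1{n^4}\right).$$ Consequently, the minimum over all pairs of cells $c_1,c_2$ of the shape $(n,n)$ of $|SP((n,n),c_1,c_2)|$ is $O(1/n)$ as $n\to\infty$.
   Context: A partition (shape) $\lambda=(\lambda_1,\dots,\lambda_k)$ with $\lambda_1\ge\dots\ge\lambda_k>0$ is identified with its Young diagram, the set of cells $[i,j]$ with $1\le i\le k$ and $1\le j\le\lambda_i$ (row $i$, column $j$). A standard Young tableau of shape $\lambda$ with $N=\sum\lambda_i$ cells is a bijective filling $T$ of the cells by $\{1,\dots,N\}$ with $T_{i,j}<T_{i,j+1}$ and $T_{i,j}<T_{i+1,j}$ whenever these cells exist. For cells $c_1,c_2$ of $\lambda$, the sorting probability is $SP(\lambda,c_1,c_2)=\Pr(T_{c_1}>T_{c_2})-\Pr(T_{c_2}>T_{c_1})=2\Pr(T_{c_1}>T_{c_2})-1$, where $T$ is uniformly random among standard Young tableaux of shape $\lambda$. *)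

(* Defs.v *)
From mathcomp Require Import all_boot all_order all_algebra.
Set Implicit Arguments. Unset Strict Implicit. Unset Printing Implicit Defensive.
Import Order.TTheory GRing.Theory Num.Theory.

(* Cells are 1-indexed pairs (i, j) (row i, column j), living in the finite
   "box" 'I_(k+1) * 'I_(la_1+1); the Young diagram is the subset in_diag. *)

Definition is_partition (la : seq nat) : bool :=
  sorted geq la && all (fun x => 0 < x) la.

Notation box la := ('I_(size la).+1 * 'I_(head 0%N la).+1)%type.

Definition in_diag (la : seq nat) (c : box la) : bool :=
  (0 < c.1 <= size la)%N && (0 < c.2 <= nth 0%N la c.1.-1)%N.

(* A filling of the box by numbers 0..N (N = |la|); cells outside the
   diagram are required to carry 0, so fillings correspond exactly to
   fillings of the diagram. *)
Notation tab la := {ffun box la -> 'I_(sumn la).+1}.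

Definition is_syt (la : seq nat) (T : tab la) : bool :=
  [&& [forall c : box la, (~~ in_diag c) ==> (T c == ord0)],
      [forall c : box la, in_diag c ==> (0 < T c)%N],
      [forall c : box la, forall d : box la,
          [&& in_diag c, in_diag d & T c == T d] ==> (c == d)],
      [forall k : 'I_(sumn la).+1,
          (0 < k)%N ==> [exists c : box la, in_diag c && (T c == k)]],
      [forall c : box la, forall d : box la,
          [&& in_diag c, in_diag d, (c.1 == d.1 :> nat) & (d.2 == c.2.+1 :> nat)]
            ==> (T c < T d)%N] &
      [forall c : box la, forall d : box la,
          [&& in_diag c, in_diag d, (c.2 == d.2 :> nat) & (d.1 == c.1.+1 :> nat)]
            ==> (T c < T d)%N]].

Definition SP (la : seq nat) (c1 c2 : box la) : rat :=
  ((#|[set T : tab la | is_syt T && (T c2 < T c1)%N]|%:R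
    - #|[set T : tab la | is_syt T && (T c1 < T c2)%N]|%:R)
   / #|[set T : tab la | is_syt T]|%:R)%R.

(* Main.v *)
Require Import Defs.
From mathcomp Require Import all_boot all_order all_algebra.
From mathcomp Require Import zify ring lra.
Import Order.TTheory GRing.Theory Num.Theory.
Set Implicit Arguments. Unset Strict Implicit. Unset Printing Implicit Defensive.

Definition Pw (w : seq bool) (b : bool) (j k : nat) : bool :=
  (nth false w k == b) && (count (pred1 b) (take k.+1 w) == j).

Lemma count_take_S (p : pred bool) (w : seq bool) m : m < size w ->
  count p (take m.+1 w) = count p (take m w) + p (nth false w m).
Proof. by move=> h; rewrite (take_nth false h) -cats1 count_cat /= addn0. Qed.

Lemma count_take_mono (p : pred bool) (w : seq bool) m m' : m <= m' ->
  count p (take m w) <= count p (take m' w).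
Proof.
move=> h; rewrite -(subnKC h); elim: (m' - m) => [|d IH]; first by rewrite addn0.
case: (ltnP (m + d) (size w)) => hs.
  by rewrite addnS count_take_S // (leq_trans IH) // leq_addr.
by rewrite addnS (take_oversize (leqW hs)); move: IH; rewrite (take_oversize hs).
Qed.

Lemma Pw_uniq w b j k k' : k < size w -> k' < size w ->
  Pw w b j k -> Pw w b j k' -> k = k'.
Proof.
wlog: k k' / k <= k'.
  move=> H hk hk' p p'; case: (leqP k k') => h; first exact: H.
  by symmetry; apply: H => //; apply: ltnW.
rewrite leq_eqVlt => /orP[/eqP //|lt] hk hk' /andP[_ /eqP c] /andP[/eqP n' /eqP c'].
have := count_take_mono (pred1 b) w lt.
have e := count_take_S (pred1 b) hk'; rewrite c' n' /= eqxx in e.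
by rewrite c {1}e (addn1 (count _ _)) ltnn.
Qed.

Lemma Pw_exists w b j : 0 < j -> j <= count (pred1 b) w ->
  exists2 k, k < size w & Pw w b j k.
Proof.
elim: w j => [|x w IH] j j0 /=; first by rewrite leqNgt j0.
case: (eqVneq x b) => [->|ne] /=.
  rewrite add1n; case: j j0 => // -[|j] _ h.
    by exists 0 => //; rewrite /Pw /= eqxx take0.
  have [k hk /andP[a c]] := IH j.+1 isT h.
  by exists k.+1 => //; rewrite /Pw /= a eqxx /= add1n.
rewrite add0n => h.
have [k hk /andP[a c]] := IH j j0 h.
by exists k.+1 => //; rewrite /Pw /= a /= (negbTE ne) add0n.
Qed.

Lemma consb_inj (b : bool) : injective (cons b). Proof. by move=> x y []. Qed.

Fixpoint allw (m : nat) : seq (seq bool) :=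
  if m is m'.+1 then map (cons true) (allw m') ++ map (cons false) (allw m')
  else [:: [::]].

Lemma mem_allw m w : (w \in allw m) = (size w == m).
Proof.
elim: m w => [|m IH] w; case: w => [|b w] //=.
  by rewrite mem_cat; apply/negP => /orP[] /mapP[? _].
rewrite mem_cat eqSS; case: b.
  rewrite (mem_map (@consb_inj true)) IH.
  by apply/orP/idP => [[//|/mapP[? _ //]]|h]; left.
rewrite (mem_map (@consb_inj false)) IH.
by apply/orP/idP => [[/mapP[? _ //]|//]|h]; right.
Qed.

Lemma uniq_allw m : uniq (allw m).
Proof.
elim: m => //= m IH; rewrite cat_uniq !map_inj_uniq //; try exact: consb_inj.
rewrite IH /= andbT; apply/hasPn => x /mapP[y _ ->]; apply/mapP => -[z _ //].
Qed.

Fixpoint okh (h : nat) (w : seq bool) : bool :=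
  match w with
  | [::] => h == 0
  | false :: w' => okh h.+1 w'
  | true :: w' => (0 < h) && okh h.-1 w'
  end.

Lemma okhP h w : okh h w <->
  (forall m, count (pred1 true) (take m w) <= h + count (pred1 false) (take m w))
  /\ count (pred1 true) w = h + count (pred1 false) w.
Proof.
elim: w h => [|b w IH] h /=.
  split; first by move/eqP->.
  by case=> _; rewrite addn0 => <-.
case: b => /=.
  case: h => [|h] /=.
    split => //; case=> H1 _; have := H1 1; by rewrite /= take0.
  split.
    case/IH=> H1 H2; split.
      case=> [|m] /=; first by [].
      by have := H1 m; rewrite add1n add0n addSn ltnS.
    by rewrite H2 add1n add0n addSn.
  case=> H1 H2; apply/IH; split.
    by move=> m; have := H1 m.+1; rewrite /= add1n add0n addSn ltnS.
  by move: H2; rewrite add1n add0n addSn => -[].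
split.
  case/IH=> H1 H2; split.
    case=> [|m] /=; first by [].
    by have := H1 m; rewrite add1n add0n addnS addSn.
  by rewrite H2 add1n add0n addnS addSn.
case=> H1 H2; apply/IH; split.
  by move=> m; have := H1 m.+1; rewrite /= add1n add0n addnS addSn.
by move: H2; rewrite add1n add0n addnS addSn.
Qed.

Definition F h m := count (okh h) (allw m).

Lemma FS h m : F h m.+1 = F h.+1 m + (if h is h'.+1 then F h' m else 0).
Proof.
rewrite /F /= count_cat !count_map addnC; congr (_ + _).
by case: h => [|h]; [rewrite (@eq_count _ _ pred0) ?count_pred0|apply: eq_count].
Qed.

Lemma count_allwS (P : pred (seq bool)) m : count P (allw m.+1) =
  count (fun w => P (true :: w)) (allw m) + count (fun w => P (false :: w)) (allw m).
Proof. by rewrite /= count_cat !count_map. Qed.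

Lemma count_false (s : seq (seq bool)) : count (fun _ => false) s = 0.
Proof. by elim: s. Qed.

Definition fff := [:: false; false; false].

Lemma count_fff m :
  count (fun w => okh 0 w && (take 3 w == fff)) (allw m.+3) = F 3 m.
Proof.
rewrite !count_allwS /= !count_pred0 !add0n.
rewrite (@eq_count _ _ pred0); last by move=> w; rewrite take0 andbF.
rewrite !count_pred0 !add0n; apply: eq_count => w; by rewrite take0 eqxx andbT.
Qed.

Lemma F_small h m : m < h -> F h m = 0.
Proof.
elim: m h => [|m IH] h hm; first by case: h hm.
rewrite FS (IH h.+1); last by apply: ltnW; apply: ltnW.
case: h hm => // h hm; rewrite IH //.
Qed.

Lemma F_diag h : F h h = 1.
Proof.
elim: h => [//|h IH].
by rewrite FS F_small // IH.
Qed.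

Definition cm M k := if k is k'.+1 then 'C(M, k') else 0.

Lemma binS_cm L k : 'C(L.+1, k) = 'C(L, k) + cm L k.
Proof. by case: k => [|k] /=; rewrite ?bin0 ?addn0 // binS. Qed.

Lemma F_closed k h : F h (h + k.*2) + cm (h + k.*2) k = 'C(h + k.*2, k).
Proof.
elim: k h => [|k IHk] h.
  by rewrite double0 addn0 F_diag bin0.
elim: h => [|h IHh].
  have e : 0 + k.+1.*2 = (1 + k.*2).+1 by rewrite doubleS add0n add1n.
  rewrite e FS /= addn0 binS_cm addnCA IHk.
  have s : 'C(1 + k.*2, k.+1) = 'C(1 + k.*2, k).
    rewrite -[in RHS](@bin_sub (1 + k.*2) k); last by rewrite -addnn add1n leqW // leq_addr.
    by congr 'C(_, _); rewrite -addnn add1n subSn ?leq_addr // addnK.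
  by rewrite binS s.
have e : h.+1 + k.+1.*2 = (h.+2 + k.*2).+1 by rewrite doubleS !addnS addSn.
have e2 : h + k.+1.*2 = h.+2 + k.*2 by rewrite doubleS !addnS.
rewrite e FS /= binS_cm.
have h1 := IHk h.+2. have h2 := IHh; rewrite e2 /= in h2.
rewrite binS -h1 -h2; lia.
Qed.


Notation L n := [:: n; n].

Definition row n (d : box (L n)) : bool := (d.1 == 2 :> nat).

Definition phi n (T : tab (L n)) : seq bool :=
  [seq [exists d : box (L n), [&& in_diag d, (T d == k.+1 :> nat) & row d]] | k <- iota 0 n.*2].

Lemma diagE n (d : box (L n)) : in_diag d = (0 < d.1) && (0 < d.2).
Proof.
case: d => [[[|[|[|i]]] hi] [j hj]] //=; rewrite /in_diag /=.
- by move: hj; rewrite /= ltnS => ->; rewrite andbT.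
- by move: hj; rewrite /= ltnS => ->; rewrite andbT.
Qed.

Lemma row12 n (d : box (L n)) : in_diag d -> d.1 = (if row d then 2 else 1) :> nat.
Proof.
rewrite diagE /row; case: d => [[[|[|[|i]]] hi] [j hj]] //=.
Qed.

Lemma sumnL n : sumn (L n) = n.*2.
Proof. by rewrite /= addn0 addnn. Qed.

Lemma valT n (T : tab (L n)) d : T d <= n.*2.
Proof. by rewrite -ltnS -(sumnL n). Qed.

Lemma size_phi n (T : tab (L n)) : size (phi T) = n.*2.
Proof. by rewrite size_map size_iota. Qed.

Section Syt.
Variables (n : nat) (T : tab (L n)).
Hypothesis hT : is_syt T.

Lemma syt0 d : ~~ in_diag d -> T d = 0 :> nat.
Proof. by case/and5P: hT => /forallP/(_ d)/implyP H *; rewrite (eqP (H _)). Qed.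

Lemma sytpos d : in_diag d -> 0 < T d.
Proof. by case/and5P: hT => _ /forallP/(_ d)/implyP H *; apply: H. Qed.

Lemma sytinj d d' : in_diag d -> in_diag d' -> T d = T d' :> nat -> d = d'.
Proof.
move=> h1 h2 h3.
case/and5P: hT => _ _ /forallP/(_ d)/forallP/(_ d')/implyP H *.
by apply/eqP/H; rewrite h1 h2 /=; apply/eqP/val_inj.
Qed.

Lemma sytsurj x : 0 < x <= n.*2 -> exists2 d, in_diag d & T d = x :> nat.
Proof.
case/andP=> x0 xn; case/and5P: hT => _ _ _ /forallP H *.
have xl : x < (sumn (L n)).+1 by rewrite sumnL ltnS.
have /implyP/(_ x0)/existsP[d /andP[dd /eqP e]] := H (Ordinal xl).
by exists d => //; rewrite e.
Qed.

Lemma sytrow d d' : in_diag d -> in_diag d' -> d.1 = d'.1 :> nat ->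
  d'.2 = (d.2).+1 :> nat -> T d < T d'.
Proof.
case/and5P: hT => _ _ _ _ /andP[/forallP/(_ d)/forallP/(_ d')/implyP H _] h1 h2 h3 h4.
by apply: H; rewrite h1 h2 h3 h4 !eqxx.
Qed.

Lemma sytcol d d' : in_diag d -> in_diag d' -> d.2 = d'.2 :> nat ->
  d'.1 = (d.1).+1 :> nat -> T d < T d'.
Proof.
case/and5P: hT => _ _ _ _ /andP[_ /forallP/(_ d)/forallP/(_ d')/implyP H] h1 h2 h3 h4.
by apply: H; rewrite h1 h2 h3 h4 !eqxx.
Qed.


Lemma nth_phi k : k < n.*2 ->
  nth false (phi T) k = [exists d, [&& in_diag d, T d == k.+1 :> nat & row d]].
Proof. by move=> hk; rewrite (nth_map 0) ?size_iota // nth_iota. Qed.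

Lemma RL d : in_diag d -> nth false (phi T) (T d).-1 = row d.
Proof.
move=> hd; have p := sytpos hd.
rewrite nth_phi; last by rewrite prednK // valT.
rewrite prednK //; apply/existsP/idP => [[d' /and3P[dd' /eqP e r]]|r].
  by rewrite -(sytinj dd' hd e).
by exists d; rewrite hd eqxx r.
Qed.

Definition S b m := [set d : box (L n) | [&& in_diag d, row d == b & T d <= m]].

Lemma CNT b m : m <= n.*2 -> count (pred1 b) (take m (phi T)) = #|S b m|.
Proof.
elim: m => [|m IH] hm.
  rewrite take0 /=; apply/esym/eqP; rewrite cards_eq0; apply/eqP/setP => d.
  rewrite !inE; apply/negbTE/and3P => -[h _ le].
  by have := sytpos h; rewrite lt0n -leqn0 le.
have hs : m < size (phi T) by rewrite size_map size_iota.
rewrite count_take_S //; rewrite IH; last exact: ltnW.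
have [d0 hd0 e0] : exists2 d, in_diag d & T d = m.+1 :> nat by apply: sytsurj; rewrite ltn0Sn hm.
have := RL hd0; rewrite e0 -pred_Sn => ->.
have E : forall d, (d \in S b m.+1) = (d \in S b m) || ((d == d0) && (row d0 == b)).
  move=> d; rewrite !inE leq_eqVlt ltnS.
  case: (eqVneq d d0) => [->|ne] /=; first by rewrite hd0 e0 eqxx ltnn; case: (_ == b).
  rewrite orbF; case: (boolP (in_diag d)) => //= hd.
  case: (eqVneq (T d : nat) m.+1) => //= e.
  by case/eqP: ne; apply: sytinj => //; rewrite e e0.
case: (eqVneq (row d0) b) => eb /=.
  have -> : S b m.+1 = d0 |: S b m by apply/setP => d; rewrite E !inE eb eqxx andbT orbC.
  by rewrite cardsU1 inE e0 ltnn !andbF addnC /= eb eqxx.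
by rewrite (negbTE eb) addn0; apply: eq_card => d; rewrite E (negbTE eb) andbF orbF.
Qed.


Definition f1 (d : box (L n)) : box (L n) := (inord 1, d.2).

Lemma f1_in m d : d \in S true m -> f1 d \in S false m.
Proof.
rewrite !inE => /and3P[hd /eqP r hm].
have hf : in_diag (f1 d) by rewrite diagE /= inordK //; move: hd; rewrite diagE => /andP[].
rewrite hf /row /= inordK //= (leq_trans _ hm) // ltnW //.
apply: sytcol => //=; rewrite inordK //; move: r; rewrite /row => /eqP -> //.
Qed.

Lemma f1_inj m : {in S true m &, injective f1}.
Proof.
move=> d d'; rewrite !inE => /and3P[_ r _] /and3P[_ r' _] [e].
case: d d' e r r' => [a b] [a' b'] /= e r r'; rewrite /row /= in r r'.
by rewrite e; congr pair; apply: ord_inj; move: r r'; rewrite !eqb_id => /eqP -> /eqP ->.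
Qed.

Lemma S_le m : #|S true m| <= #|S false m|.
Proof.
rewrite -(card_in_imset (@f1_inj m)); apply: subset_leq_card.
by apply/subsetP => x /imsetP[d hd ->]; apply: f1_in.
Qed.

Lemma S_eq : #|S true n.*2| = #|S false n.*2|.
Proof.
apply/eqP; rewrite eqn_leq S_le /=.
rewrite -(card_in_imset (@f1_inj n.*2)); apply: subset_leq_card.
apply/subsetP => d'; rewrite inE => /and3P[hd' /eqP r _].
have d1 := row12 hd'; rewrite r in d1.
have hd : in_diag ((inord 2, d'.2) : box (L n)).
  by rewrite diagE /= inordK //; move: hd'; rewrite diagE => /andP[].
apply/imsetP; exists (inord 2, d'.2).
  by rewrite inE hd /row /= inordK // eqxx valT.
rewrite /f1 /=; case: d' hd' r d1 {hd} => a b /= _ _ e; congr (_, _); apply: val_inj.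
by rewrite /= inordK // e.
Qed.

Lemma phi_ok : okh 0 (phi T).
Proof.
apply/okhP; split.
  move=> m; rewrite add0n; case: (leqP m n.*2) => hm.
    by rewrite !CNT // S_le.
  rewrite take_oversize ?size_phi ?(ltnW hm) //.
  rewrite -{1 2}(take_size (phi T)) size_phi !CNT // S_le //.
rewrite add0n -{1 2}(take_size (phi T)) size_phi !CNT // S_eq //.
Qed.

End Syt.



Lemma sorted_map_iota (g : nat -> nat) a m :
  (forall j, a <= j -> j.+1 < a + m -> g j < g j.+1) ->
  sorted ltn [seq g j | j <- iota a m].
Proof.
elim: m a => [|m IH] a H //=.
case: m IH H => [|m] IH H //=.
rewrite H ?leqnn ?addnS ?ltnS ?leq_addr //=.
have := IH a.+1; rewrite /= => -> // j hj hj'.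
by apply: H; [apply: ltnW | rewrite addnS -addSn].
Qed.

Definition rl n (T : tab (L n)) (i : nat) : seq nat :=
  [seq (T (inord i, inord j) : nat) | j <- iota 1 n].

Section Inj.
Variables (n : nat) (T : tab (L n)).
Hypothesis hT : is_syt T.

Lemma rl_sorted i : 0 < i <= 2 -> sorted ltn (rl T i).
Proof.
move=> /andP[i0 i2]; apply: sorted_map_iota => j j1 jn.
apply: (sytrow hT); rewrite ?diagE /= ?inordK //; try lia.
Qed.

Lemma mem_rl i x : 0 < i <= 2 ->
  (x \in rl T i) = [exists d, [&& in_diag d, d.1 == i :> nat & T d == x :> nat]].
Proof.
move=> /andP[i0 i2]; apply/mapP/existsP => [[j hj ->]|[d /and3P[hd /eqP di /eqP dx]]].
  move: hj; rewrite mem_iota => /andP[j1 jn].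
  exists (inord i, inord j); rewrite diagE /= !inordK ?eqxx ?andbT //; lia.
exists (d.2 : nat); first by rewrite mem_iota; move: hd; rewrite diagE => /andP[_ ->]; rewrite /= add1n ltnS -ltnS ltn_ord.
by rewrite -dx -di !inord_val; case: d {hd di dx}.
Qed.

Lemma ex_row i x : 0 < i <= 2 ->
  [exists d, [&& in_diag d, d.1 == i :> nat & T d == x :> nat]] =
  (0 < x <= n.*2) && (nth false (phi T) x.-1 == (i == 2)).
Proof.
move=> hi; apply/existsP/andP => [[d /and3P[hd /eqP di /eqP dx]]|[hx /eqP hn]].
  by rewrite -dx sytpos // valT (RL hT hd) /row di eqxx.
have [d hd dx] := sytsurj hT hx; exists d; rewrite hd dx eqxx andbT /=.
have := RL hT hd; rewrite dx hn => r.
rewrite (row12 hd) -r; move: hi; case: i {hn r} => [|[|[|i]]] //.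
Qed.

End Inj.

Lemma phi_inj n (T T' : tab (L n)) : is_syt T -> is_syt T' -> phi T = phi T' -> T = T'.
Proof.
move=> hT hT' e; apply/ffunP => c.
case: (boolP (in_diag c)) => hc; last by apply: ord_inj; rewrite (syt0 hT hc) (syt0 hT' hc).
have hi : 0 < c.1 <= 2 by move: hc; rewrite diagE /= => /andP[-> _]; rewrite -ltnS ltn_ord.
have E : rl T c.1 = rl T' c.1.
  apply: (irr_sorted_eq ltn_trans ltnn); rewrite ?rl_sorted // => x.
  by rewrite !mem_rl // !ex_row // e.
have hj : 0 < c.2 <= n by move: hc; rewrite diagE => /andP[_ ->]; rewrite -ltnS ltn_ord.
have := congr1 (nth 0 ^~ c.2.-1) E; rewrite /rl !(nth_map 0) ?size_iota ?nth_iota; try lia.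
rewrite add1n prednK; last lia.
by rewrite !inord_val => h; apply: ord_inj; move: h; case: c {hc hi E hj}.
Qed.

Definition psi n (w : seq bool) : tab (L n) :=
  [ffun c => if in_diag c then
     (if [pick k : 'I_n.*2 | Pw w (row c) c.2 k] is Some k then inord k.+1 else ord0)
   else ord0].

Section Psi.
Variables (n : nat) (w : seq bool).
Hypotheses (hs : size w = n.*2) (hok : okh 0 w).

Lemma ballot m : count (pred1 true) (take m w) <= count (pred1 false) (take m w).
Proof. by have [H _] := (okhP 0 w).1 hok; apply: H. Qed.

Lemma cnt_n b : count (pred1 b) w = n.
Proof.
have [_ H] := (okhP 0 w).1 hok; rewrite add0n in H.
have : count (pred1 true) w + count (pred1 false) w = n.*2.
  rewrite -hs -(count_predC (pred1 true)); congr (_ + _); apply: eq_count; by case.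
have H' : count (pred1 true) w = count (pred1 false) w := H.
rewrite H' addnn => /double_inj e; case: b => //; rewrite -H' in e; exact: e.
Qed.

Lemma psiE c : in_diag c -> exists2 k, k < n.*2 & Pw w (row c) c.2 k /\ (psi n w c : nat) = k.+1.
Proof.
move=> hc; have /andP[c1 c2] := hc; rewrite diagE in hc; case/andP: hc => _ hc2.
have hj : c.2 <= count (pred1 (row c)) w by rewrite cnt_n -ltnS ltn_ord.
have [k hk P] := Pw_exists hc2 hj.
exists k; first by rewrite -hs.
split => //; rewrite ffunE (_ : in_diag c) ?diagE ?hc2 ?andbT //; last by move: c1 => /andP[].
have hk2 : k < n.*2 by rewrite -hs.
case: pickP => [k' hk'|none]; last by have := none (Ordinal hk2); rewrite /= P.
have hk3 : k' < size w by rewrite hs ltn_ord.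
have e := Pw_uniq hk hk3 P hk'.
by rewrite inordK -e // ltnS sumnL.
Qed.

Lemma psi_surj k : k < n.*2 ->
  exists2 c, in_diag c & (psi n w c : nat) = k.+1 /\ row c = nth false w k.
Proof.
move=> hk; set b := nth false w k; set j := count (pred1 b) (take k.+1 w).
have hk' : k < size w by rewrite hs.
have j1 : 0 < j by rewrite /j count_take_S // /b /= eqxx addn1.
have jn : j <= n.
  rewrite -(cnt_n b) -(take_size w) /j; apply: count_take_mono; lia.
set c : box (L n) := (inord (if b then 2 else 1), inord j).
have hc : in_diag c by rewrite diagE /c /= !inordK //; case: (b).
have rc : row c = b by rewrite /row /c /= inordK //; case: (b).
exists c => //; have [k' hk'' [P ->]] := psiE hc; split => //.
congr _.+1; apply: (Pw_uniq _ _ P); rewrite ?hs //.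
by rewrite /Pw rc /c /= inordK // eqxx /j eqxx.
Qed.

Lemma psi_syt : is_syt (psi n w).
Proof.
rewrite /is_syt; apply/and5P; split; [ | | | | apply/andP; split ].
- by apply/forallP => c; apply/implyP => hc; rewrite ffunE (negbTE hc).
- by apply/forallP => c; apply/implyP => hc; have [k _ [_ ->]] := psiE hc.
- apply/forallP => c; apply/forallP => d; apply/implyP => /and3P[hc hd /eqP e].
  have [k _ [/andP[/eqP Pc /eqP Qc] ec]] := psiE hc.
  have [k' _ [/andP[/eqP Pd /eqP Qd] ed]] := psiE hd.
  have kk : k = k' by apply/eqP; rewrite -eqSS -ec -ed e.
  subst k'; have r : row c = row d by rewrite -Pc -Pd.
  have e1 := row12 hc; rewrite r -(row12 hd) in e1.
  have e2 : c.2 = d.2 :> nat by rewrite -Qc -Qd r.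
  by apply/eqP; case: c d {hc hd e Pc Qc ec Pd Qd ed r} e1 e2 => [a b] [a' b'] /= e1 e2;
     congr pair; apply: ord_inj.
- apply/forallP => x; apply/implyP => x0.
  have hx : x.-1 < n.*2 by rewrite prednK // -ltnS -(sumnL n) ltn_ord.
  have [c hc [e _]] := psi_surj hx.
  by apply/existsP; exists c; rewrite hc /=; apply/eqP/ord_inj; rewrite e prednK.
- apply/forallP => c; apply/forallP => d; apply/implyP => /and4P[hc hd /eqP e1 /eqP e2].
  have [k hk [/andP[/eqP Pc /eqP Qc] ec]] := psiE hc.
  have [k' hk' [/andP[/eqP Pd /eqP Qd] ed]] := psiE hd.
  have r : row c = row d by rewrite /row e1.
  rewrite ec ed ltnS ltnNge; apply/negP => le.
  have := count_take_mono (pred1 (row d)) w (le : k'.+1 <= k.+1).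
  by rewrite Qd -r Qc e2 ltnn.
- apply/forallP => c; apply/forallP => d; apply/implyP => /and4P[hc hd /eqP e1 /eqP e2].
  have [k hk [/andP[/eqP Pc /eqP Qc] ec]] := psiE hc.
  have [k' hk' [/andP[/eqP Pd /eqP Qd] ed]] := psiE hd.
  have hc1 := row12 hc; have hd1 := row12 hd.
  have rc : row c = false by move: hc1 hd1; rewrite e2; case: (row c); case: (row d) => //; lia.
  have rd : row d = true by move: hc1 hd1; rewrite e2; case: (row c); case: (row d) => //; lia.
  rewrite ec ed ltnS ltnNge; apply/negP; rewrite leq_eqVlt => /orP[/eqP kk|lt].
    by move: Pc Pd; rewrite kk rc rd => ->.
  have := ballot k'.+1; rewrite -rd Qd.
  have := count_take_mono (pred1 false) w (lt : k'.+1 <= k).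
  have hks : k < size w by rewrite hs.
  have := count_take_S (pred1 false) hks.
  rewrite rc in Qc Pc; move=> A B C; have D := leq_trans C B.
  by rewrite Qc Pc /= addn1 in A; rewrite -e1 A ltnn in D.
Qed.

Lemma phi_psi : phi (psi n w) = w.
Proof.
apply: (@eq_from_nth _ false); first by rewrite size_phi hs.
move=> k; rewrite size_phi => hk.
have [c hc [e r]] := psi_surj hk.
by have := RL psi_syt hc; rewrite e /= r.
Qed.

End Psi.

Lemma syt_psi_phi n (T : tab (L n)) : is_syt T -> psi n (phi T) = T.
Proof.
move=> hT; apply: phi_inj => //; first exact: psi_syt (size_phi T) (phi_ok hT).
exact: phi_psi (size_phi T) (phi_ok hT).
Qed.

Lemma fff_eq (s : seq bool) : size s = 3 -> count (pred1 true) s = 0 -> s = fff.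
Proof. by case: s => [|[] [|[] [|[] [|]]]]. Qed.

Lemma cmp3 w k1 k2 : 3 <= size w -> k1 < size w -> k2 < size w ->
  Pw w false 3 k1 -> Pw w true 1 k2 -> (k1 < k2) = (take 3 w == fff).
Proof.
move=> h3 hk1 hk2 P1 P2; have P1' := P1; have P2' := P2.
case/andP: P1' => /eqP n1 /eqP c1; case/andP: P2' => /eqP n2 /eqP c2.
apply/idP/eqP => [lt|e].
  have z : count (pred1 true) (take k2 w) = 0.
    by move: c2; rewrite count_take_S // n2 /= addn1 => -[].
  have k1_2 : 2 <= k1.
    have := count_size (pred1 false) (take k1.+1 w); rewrite c1 size_take.
    by case: (ltnP k1.+1 (size w)) => hh h; lia.
  apply: fff_eq; first by rewrite size_take; case: ifP => // /negbT; rewrite -leqNgt => h; apply/eqP; rewrite eqn_leq h3 h.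
  apply/eqP; rewrite -leqn0 -z; apply: count_take_mono; lia.
have P3 : Pw w false 3 2.
  by rewrite /Pw -(nth_take _ (isT : 2 < 3)) e.
have -> := Pw_uniq hk1 (leq_trans (isT : 2 < 3) h3) P1 P3.
rewrite ltnNge; apply/negP => le.
by move: n2; rewrite -(nth_take _ (le : k2 < 3)) e; case: k2 {hk2 P2 c2} le => [|[|[|]]].
Qed.

Definition c1 n : box (L n) := (inord 1, inord 3).
Definition c2 n : box (L n) := (inord 2, inord 1).

Lemma cmpT n (T : tab (L n)) : 3 <= n -> is_syt T ->
  ((T (c1 n) < T (c2 n)) = (take 3 (phi T) == fff)) /\
  ((T (c2 n) < T (c1 n)) = ~~ (take 3 (phi T) == fff)).
Proof.
move=> n3 hT; have E := syt_psi_phi hT.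
have hs := size_phi T; have ho := phi_ok hT.
have hd1 : in_diag (c1 n) by rewrite diagE /= !inordK //; lia.
have hd2 : in_diag (c2 n) by rewrite diagE /= !inordK //; lia.
have [k1 hk1 [P1 e1]] := psiE hs ho hd1.
have [k2 hk2 [P2 e2]] := psiE hs ho hd2.
rewrite E in e1 e2.
have r1 : row (c1 n) = false by rewrite /row /= inordK.
have r2 : row (c2 n) = true by rewrite /row /= inordK.
have s1 : (c1 n).2 = 3 :> nat by rewrite /= inordK //; lia.
have s2 : (c2 n).2 = 1 :> nat by rewrite /= inordK //; lia.
rewrite r1 s1 in P1; rewrite r2 s2 in P2.
have h3 : 3 <= size (phi T) by rewrite hs; lia.
have hk1s : k1 < size (phi T) by rewrite hs.
have hk2s : k2 < size (phi T) by rewrite hs.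
have C := cmp3 h3 hk1s hk2s P1 P2.
rewrite e1 e2 !ltnS -C; split => //.
have ne : k1 != k2 by apply/eqP => k; subst k1; move: P1 P2 => /andP[/eqP a _] /andP[/eqP b _]; rewrite a in b.
by rewrite ltnNge leq_eqVlt negb_or ne.
Qed.


Lemma card_syt n (Q : pred (seq bool)) :
  #|[set T : tab (L n) | is_syt T && Q (phi T)]| = count (fun w => okh 0 w && Q w) (allw n.*2).
Proof.
set A := [set T : tab (L n) | is_syt T && Q (phi T)].
have inA T : (T \in A) = is_syt T && Q (phi T) by rewrite inE.
rewrite cardE -size_filter -(size_map (@phi n)).
apply: perm_size; apply: uniq_perm.
- rewrite map_inj_in_uniq ?enum_uniq // => T T'; rewrite !mem_enum !inA.
  by move=> /andP[h _] /andP[h' _]; apply: phi_inj.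
- by apply: filter_uniq; apply: uniq_allw.
move=> w; rewrite mem_filter mem_allw; apply/mapP/idP => [[T]|].
  rewrite mem_enum inA => /andP[hT hQ] ->.
  by rewrite phi_ok // hQ size_phi eqxx.
case/andP => /andP[ho hQ] /eqP hs; exists (psi n w); last by rewrite phi_psi.
by rewrite mem_enum inA psi_syt // phi_psi // hQ.
Qed.

Lemma count_split (s : seq (seq bool)) (a b : pred (seq bool)) :
  count (fun w => a w && ~~ b w) s + count (fun w => a w && b w) s = count a s.
Proof. by elim: s => //= x s <-; case: (a x); case: (b x) => /=; lia. Qed.



Local Open Scope ring_scope.

Lemma binR a b : ('C(a + b, a)%:R : rat) = (a + b)`!%:R / (a`!%:R * b`!%:R).
Proof.
have := bin_fact (leq_addr b a); rewrite addKn => e.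
rewrite -[in RHS]e natrM; field.
by rewrite !pnatr_eq0 -!lt0n !fact_gt0.
Qed.

Lemma arith n : (3 <= n)%N ->
  (((F 0 n.*2)%:R - (F 3 (n.*2 - 3))%:R - (F 3 (n.*2 - 3))%:R) / (F 0 n.*2)%:R
   = 3 / (2 * n%:R - 1) :> rat).
Proof.
have binR' : forall a b N, (a + b = N)%N -> ('C(N, a)%:R : rat) = N`!%:R / (a`!%:R * b`!%:R).
  by move=> a b N <-; apply: binR.
case: n => // -[//|] -[//|] -[|r] _.
  have -> : F 0 6 = 5%N by [].
  have -> : F 3 (6 - 3) = 1%N by [].
  by apply/eqP; rewrite -subr_eq0; apply/eqP; field.
have H1 := F_closed r.+4 0.
have H2 := F_closed r.+1 3.
rewrite add0n /= in H1. rewrite /= in H2.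
have e : (r.+4.*2 - 3 = 3 + r.+1.*2)%N by rewrite !doubleS; lia.
rewrite e.
have eN : (r.+4.*2 = (r+r).+4.+4)%N by lia.
have eM : (3 + r.+1.*2 = (r+r).+4.+1)%N by lia.
rewrite eN in H1 |- *; rewrite eM in H2 |- *.
set tot := F 0 _ in H1 |- *. set nb := F 3 _ in H2 |- *.
have Ht : (tot%:R : rat) = ((r+r).+4.+4)`!%:R / (r.+4`!%:R * r.+4.+1`!%:R).
  have -> : (tot%:R : rat) = ('C((r+r).+4.+4, r.+4))%:R - ('C((r+r).+4.+4, r.+3))%:R by rewrite -H1 natrD addrK.
  rewrite (binR' _ r.+4) ?(binR' _ r.+4.+1); try lia.
  rewrite !factS; field.
  have r0 := ler0n rat r.
  by repeat (apply/andP; split); (by rewrite pnatr_eq0 -lt0n fact_gt0) || (apply/eqP; lra).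
have Hb : (nb%:R : rat) = ('C((r+r).+1.+4, r.+1))%:R - ('C((r+r).+1.+4, r))%:R by rewrite -H2 natrD addrK.
rewrite (binR' _ r.+4) ?(binR' _ r.+4.+1) in Hb; try lia.
rewrite Ht Hb !factS; field.
have r0 := ler0n rat r.
by repeat (apply/andP; split); (by rewrite pnatr_eq0 -lt0n fact_gt0) || (apply/eqP; lra).
Qed.

Lemma part1 n : (3 <= n)%N ->
  SP (la := [:: n; n]) (inord 1, inord 3) (inord 2, inord 1) = 3 / (2 * n%:R - 1 : rat).
Proof.
move=> n3; rewrite /SP.
have E1 : [set T : tab (L n) | is_syt T && (T (c2 n) < T (c1 n))%N] =
          [set T : tab (L n) | is_syt T && ~~ (take 3 (phi T) == fff)].
  by apply/setP => T; rewrite !inE; case: (boolP (is_syt T)) => // hT; rewrite (cmpT n3 hT).2.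
have E2 : [set T : tab (L n) | is_syt T && (T (c1 n) < T (c2 n))%N] =
          [set T : tab (L n) | is_syt T && (take 3 (phi T) == fff)].
  by apply/setP => T; rewrite !inE; case: (boolP (is_syt T)) => // hT; rewrite (cmpT n3 hT).1.
have E0 : [set T : tab (L n) | is_syt T] = [set T : tab (L n) | is_syt T && predT (phi T)].
  by apply/setP => T; rewrite !inE andbT.
rewrite -[(inord 1, inord 3)]/(c1 n) -[(inord 2, inord 1)]/(c2 n).
rewrite E1 E2 E0 (card_syt n (fun w => ~~ (take 3 w == fff))) (card_syt n (fun w => take 3 w == fff)) (card_syt n predT).
have e6 : n.*2 = (n.*2 - 3).+3 by lia.
have C0 : count (fun w => okh 0 w && predT w) (allw n.*2) = F 0 n.*2.
  by apply: eq_count => w; rewrite andbT.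
have C2 : count (fun w => okh 0 w && (take 3 w == fff)) (allw n.*2) = F 3 (n.*2 - 3).
  by rewrite {1}e6 count_fff.
have S := count_split (allw n.*2) (okh 0) (fun w => take 3 w == fff).
have X : ((count (fun w => okh 0 w && ~~ (take 3 w == fff)) (allw n.*2))%:R : rat)
   = (F 0 n.*2)%:R - (F 3 (n.*2 - 3))%:R by rewrite -C2 /F -S natrD addrK.
by rewrite C0 C2 X (@arith n n3).
Qed.

Lemma part2 (n : nat) : (3 <= n)%N ->
  `| 3 / (2 * n%:R - 1) - (3/2 / n%:R + 3/4 / n%:R ^+ 2 + 3/8 / n%:R ^+ 3) |
    <= (3/8 : rat) / n%:R ^+ 4.
Proof.
move=> n3; have x3 : (3 : rat) <= n%:R by rewrite (ler_nat _ 3 n).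
set x : rat := n%:R in x3 *.
have x0 : x != 0 by apply/eqP; lra.
have y0 : 2 * x - 1 != 0 by apply/eqP; lra.
have e : 3 / (2 * x - 1) - (3/2 / x + 3/4 / x ^+ 2 + 3/8 / x ^+ 3)
       = 3 / (8 * x ^+ 3 * (2 * x - 1)) by field; rewrite x0 y0.
have p : 0 < 8 * x ^+ 3 * (2 * x - 1) by rewrite !mulr_gt0 ?exprn_gt0 //; lra.
rewrite e ger0_norm; last by rewrite divr_ge0 // ltW.
rewrite -subr_ge0.
have e2 : 3 / 8 / x ^+ 4 - 3 / (8 * x ^+ 3 * (2 * x - 1))
        = 3 * (x - 1) / (8 * x ^+ 3 * (2 * x - 1) * x) by field; rewrite x0 y0.
rewrite e2 divr_ge0 // ?ltW ?mulr_gt0 //; lra.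
Qed.

Lemma part3 (n : nat) : (3 <= n)%N ->
  `| 3 / (2 * n%:R - 1) | <= (3 : rat) / n%:R.
Proof.
move=> n3; have x3 : (3 : rat) <= n%:R by rewrite (ler_nat _ 3 n).
set x : rat := n%:R in x3 *.
have x0 : x != 0 by apply/eqP; lra.
have y0 : 2 * x - 1 != 0 by apply/eqP; lra.
rewrite ger0_norm; last by rewrite divr_ge0 //; lra.
rewrite -subr_ge0.
have e2 : 3 / x - 3 / (2 * x - 1) = 3 * (x - 1) / (x * (2 * x - 1)) by field; rewrite x0 y0.
rewrite e2 divr_ge0 // ?ltW ?mulr_gt0 //; lra.
Qed.

Theorem mainTheorem1 :
  (forall n : nat, (3 <= n)%N ->
     SP (la := [:: n; n]) (inord 1, inord 3) (inord 2, inord 1)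
       = 3 / (2 * n%:R - 1 : rat))
  /\ (exists C : rat, forall n : nat, (3 <= n)%N ->
       `| 3 / (2 * n%:R - 1) - (3/2 / n%:R + 3/4 / n%:R ^+ 2 + 3/8 / n%:R ^+ 3) |
         <= C / n%:R ^+ 4)
  /\ (exists C : rat, forall n : nat, (3 <= n)%N ->
       exists c1 c2 : box [:: n; n],
         [/\ in_diag c1, in_diag c2, c1 != c2 & `| SP c1 c2 | <= C / n%:R]).
Proof.
split; first exact: part1.
split; first by exists (3/8); apply: part2.
exists 3 => n n3; exists (inord 1, inord 3), (inord 2, inord 1); split.
- by rewrite diagE /= !inordK //; lia.
- by rewrite diagE /= !inordK //; lia.
- by apply/eqP => -[] /(congr1 val) /=; rewrite !inordK.
- by rewrite part1 // part3.
Qed.
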